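(* For all integers $n\ge k\ge1$, there exists a monotone $(n-k)$-admissible $k$-CNF formula $F$ on $n$ variables with $|\mathrm{sat}_{n-k}(F)|=S(n,n-k,k)$.
   Context: A $k$-CNF formula is a conjunction of clauses (disjunctions of literals) each of width at most $k$; it is monotone if no literal is negated. $\mathrm{sat}_t(F)$ is the set of satisfying assignments of Hamming weight exactly $t$; $F$ is $t$-admissible if it has no satisfying assignment of Hamming weight less than $t$; $S(n,t,k)$ is the maximum of $|\mathrm{sat}_t(F)|$ over all $t$-admissible $k$-CNF formulas $F$ on $n$ variables. *)

(* Defs.v *)
From mathcomp Require Import all_boot.
Set Implicit Arguments. Unset Strict Implicit. Unset Printing Implicit Defensive.

(* A literal is a pair (i, b): b = true is the positive
   literal x_i, b = false the negated literal ~x_i.  A clause is a finite set of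
   literals (a disjunction); a CNF formula is a finite set of clauses (a
   conjunction).  An assignment is the set of variables set to true, so its
   Hamming weight is its cardinality. *)
Definition literal (n : nat) := ('I_n * bool)%type.
Definition clause (n : nat) := {set literal n}.
Definition cnf (n : nat) := {set clause n}.
Definition assignment (n : nat) := {set 'I_n}.

Definition lit_sat n (a : assignment n) (l : literal n) : bool :=
  (l.1 \in a) == l.2.
Definition clause_sat n (a : assignment n) (C : clause n) : bool :=
  [exists l in C, lit_sat a l].
Definition cnf_sat n (a : assignment n) (F : cnf n) : bool :=
  [forall C in F, clause_sat a C].

Definition is_kcnf n (k : nat) (F : cnf n) : bool :=
  [forall C in F, #|C| <= k].

Definition monotone n (F : cnf n) : bool :=
  [forall C in F, [forall l in C, l.2]].

Definition sat_t n (t : nat) (F : cnf n) : {set assignment n} :=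
  [set a : assignment n | (#|a| == t) && cnf_sat a F].

Definition admissible n (t : nat) (F : cnf n) : bool :=
  [forall a : assignment n, (#|a| < t) ==> ~~ cnf_sat a F].

Definition S (n t k : nat) : nat :=
  \max_(F : cnf n | is_kcnf k F && admissible t F) #|sat_t t F|.

(* Main.v *)
Require Import Defs.
From mathcomp Require Import all_boot.
From mathcomp Require Import zify.
Set Implicit Arguments. Unset Strict Implicit. Unset Printing Implicit Defensive.

Section Aux.
Variables (n k : nat).

Lemma key (F : cnf n) (a : assignment n) :
  is_kcnf k F -> ~~ cnf_sat a F -> k < #|~: a| ->
  exists i, (i \notin a) && ~~ cnf_sat (i |: a) F.
Proof.
move=> /forallP hk /forallPn [C]; rewrite negb_imply => /andP [CF /existsPn nC] hc.
have hC : #|C| <= k by have := hk C; rewrite CF.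
have : ~~ (~: a \subset [set l.1 | l in C]).
  apply/negP => /subset_leq_card; have := leq_imset_card (fun l : literal n => l.1) C.
  move=> h1 h2; have := leq_trans (leq_trans h2 h1) hC; by rewrite leqNgt hc.
case/subsetPn => i; rewrite inE => ia iv.
exists i; rewrite ia /=; apply/forallPn; exists C; rewrite CF /=.
apply/existsPn => l; apply/negP => /andP [lC].
have li : l.1 != i.
  by apply/eqP => e; move: iv; rewrite -e; case/negP; apply/imsetP; exists l.
have := nC l; rewrite lC /= /lit_sat in_setU1 (negbTE li) /=.
by move/negP.
Qed.

Lemma extend (F : cnf n) (t : nat) : is_kcnf k F -> t + k <= n ->
  forall d (a : assignment n), #|a| + d = t -> ~~ cnf_sat a F ->
  exists b : assignment n, [&& a \subset b, #|b| == t & ~~ cnf_sat b F].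
Proof.
move=> hk htk; elim=> [|d IH] a ha hs.
  by exists a; rewrite subxx hs andbT; apply/eqP; lia.
have hc : k < #|~: a|.
  have := cardsC a; rewrite card_ord; lia.
case: (key hk hs hc) => i /andP [ia hi].
have ci : #|i |: a| = #|a|.+1 by rewrite cardsU1 ia.
case: (IH (i |: a) ltac:(lia) hi) => b /and3P [sb cb ub].
exists b; rewrite cb ub !andbT; apply/subsetP => x xa; apply: (subsetP sb); by rewrite in_setU1 xa orbT.
Qed.

Definition clause_of (b : assignment n) : clause n := [set (j, true) | j in ~: b].

Lemma clause_ofE (a b : assignment n) : clause_sat a (clause_of b) = ~~ (a \subset b).
Proof.
apply/existsP/subsetPn.
  case=> l /andP [/imsetP [j jb ->]]; rewrite /lit_sat /= eqb_id => ja.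
  by exists j => //; rewrite inE in jb.
case=> j ja jb; exists (j, true); rewrite /lit_sat /= eqb_id ja andbT.
by apply/imsetP; exists j; rewrite ?inE.
Qed.

Lemma card_clause_of (b : assignment n) : #|clause_of b| = n - #|b|.
Proof.
rewrite card_imset; last by move=> x y [].
have := cardsC b; rewrite card_ord; lia.
Qed.

End Aux.

Theorem lemma5 (n k : nat) (hk : 1 <= k) (hkn : k <= n) :
  exists F : cnf n,
    [/\ monotone F, is_kcnf k F, admissible (n - k) F
      & #|sat_t (n - k) F| = S n (n - k) k].
Proof.
set t := n - k.
have ne : 0 < #|[pred F : cnf n | is_kcnf k F && admissible t F]|.
  apply/card_gt0P; exists [set set0]; rewrite inE /=; apply/andP; split.
    by apply/forallP => C; apply/implyP; rewrite inE => /eqP ->; rewrite cards0.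
  apply/forallP => a; apply/implyP => _; apply/forallPn; exists set0.
  rewrite inE eqxx /=; apply/existsPn => l; by rewrite inE.
case: (eq_bigmax_cond (fun F : cnf n => #|sat_t t F|) ne) => F0.
rewrite inE => /andP [kF aF] hmax.
set G : cnf n := [set clause_of b | b in [set b : assignment n | (#|b| == t) && ~~ cnf_sat b F0]].
have Gsat (a : assignment n) : cnf_sat a G = [forall b : assignment n, ((#|b| == t) && ~~ cnf_sat b F0) ==> ~~ (a \subset b)].
  apply/forallP/forallP => h.
    move=> b; apply/implyP => hb; rewrite -clause_ofE.
    have := h (clause_of b); rewrite (_ : clause_of b \in G) //.
    by apply/imsetP; exists b; rewrite ?inE.
  move=> C; apply/implyP => /imsetP [b]; rewrite inE => hb ->; rewrite clause_ofE.
  by have := h b; rewrite hb.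
have satE : sat_t t G = sat_t t F0.
  apply/setP => a; rewrite !inE; case/boolP: (#|a| == t) => //= /eqP ca.
  rewrite Gsat; apply/forallP/idP => h.
    apply/negPn/negP => ha; have := h a; rewrite ca eqxx ha subxx; done.
  move=> b; apply/implyP => /andP [/eqP cb ub]; apply/negP => sab.
  have : a == b by rewrite eqEcard sab /= cb ca.
  by move/eqP => e; move: ub; rewrite -e h.
exists G; split.
- apply/forallP => C; apply/implyP => /imsetP [b _ ->].
  by apply/forallP => l; apply/implyP => /imsetP [j _ ->].
- apply/forallP => C; apply/implyP => /imsetP [b]; rewrite inE => /andP [/eqP cb _] ->.
  rewrite card_clause_of cb; rewrite /t; lia.
- apply/forallP => a; apply/implyP => ha.
  have ua : ~~ cnf_sat a F0 by move/forallP: aF => /(_ a); rewrite ha.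
  have htk : t + k <= n by rewrite /t; lia.
  have [b /and3P [sab cb ub]] := extend kF htk (d:=t - #|a|) (a:=a) ltac:(lia) ua.
  rewrite Gsat; apply/forallPn; exists b; rewrite cb ub /= sab; done.
- rewrite satE /S -/t; rewrite (eq_bigl (fun F => F \in [pred F : cnf n | is_kcnf k F && admissible t F])) ?hmax // => F; rewrite inE.
Qed.
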